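(* Fix a cell with no source term ($S=0$) and total energy $E=1$, and a positive integer $N_{obj}$. Start from a finite population of $N^0\ge1$ particles with positive weights summing to $1$, and apply repeatedly (with fresh independent uniform random variables at each iteration) the cell-based population control step with non-conservative splitting described in the context, each time to the population produced by the previous iteration. Let $N^l$ be the number of particles in the cell after the $l$-th iteration. Then $\lim_{l\to\infty}\mathbb{P}(N^l=N_{obj})=1$; more precisely, there exists $\lambda>0$ such that $\mathbb{P}(N^l\neq N_{obj})\le e^{-l\lambda}$ for all $l$.
   Context: Cell-based population control step for a single cell. Input: a finite collection of existing particles with positive weights $w_1,\dots,w_N$, their total energy $E=\sum_p w_p$, a source energy $S\ge0$, and a positive integer $N_{obj}$, with $E+S>0$. (1) Set $w_{obj}=(E+S)/N_{obj}$. (2) If $S>0$, emit $N^{vol}=\max(1,\lfloor S/w_{obj}\rfloor)$ particles of weight $S/N^{vol}$; otherwise none. (3) If $E>0$, for each existing particle $p$ draw independently $u_p\sim\mathcal U(0,1)$, set $I_p=\lfloor w_p/w_{obj}\rfloor$, $R_p=w_p/w_{obj}-I_p$. If $I_p=0$ (Russian Roulette): the particle is killed if $R_p<u_p$, otherwise its weight becomes $w_{obj}$. If $I_p\ge1$ (Splitting): with $N^{split}_p=I_p+\mathbf 1_{\{u_p<R_p\}}$, the particle is replaced by $N^{split}_p$ copies each of weight $w_{obj}$ (non-conservative splitting). (4) Renormalization: multiply all particle weights by $c=(E+S)/(\text{total weight after (2)-(3)})$. (5) Non-void correction: if $S=0$ and no particle remains after (3), the population becomes a single particle of weight $E$. 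*)

(* Defs.v *)
From HB Require Import structures.
From mathcomp Require Import all_boot all_order all_algebra.
From mathcomp Require Import all_classical all_reals all_analysis.
Set Implicit Arguments. Unset Strict Implicit. Unset Printing Implicit Defensive.
Import Order.TTheory GRing.Theory Num.Theory.
Local Open Scope classical_set_scope.
Local Open Scope ring_scope.

Section PopulationControl.
Variable R : realType.

(* Treatment of one existing particle of weight w, with uniform draw u,
   for target weight wobj (step (3)): Russian roulette if I = 0,
   non-conservative splitting if I >= 1.  For w/wobj >= 0,
   truncn (w / wobj) is the floor of w / wobj. *)
Definition pc_particle (wobj w u : R) : seq R :=
  let I := Num.truncn (w / wobj) in
  let Rp := w / wobj - I%:R in
  if I == 0%N then (if Rp < u then [::] else [:: wobj])
  else nseq (I + nat_of_bool (u < Rp)%R)%N wobj.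

(* The cell-based population control step (1)-(5).
   ws : existing particle weights (particle p = ws`_p), S : source energy,
   u p : the uniform draw attached to particle p. *)
Definition pc_step (Nobj : nat) (S : R) (u : nat -> R) (ws : seq R) : seq R :=
  let E := \sum_(w <- ws) w in
  let wobj := (E + S) / Nobj%:R in
  let Nvol := maxn 1 (Num.truncn (S / wobj)) in
  let vol := if 0 < S then nseq Nvol (S / Nvol%:R) else [::] in
  let ex := if 0 < E then
              flatten [seq pc_particle wobj (nth 0 ws p) (u p) | p <- iota 0 (size ws)]
            else [::] in
  let pop := vol ++ ex in
  let tot := \sum_(w <- pop) w in
  if (S == 0) && (pop == [::]) then [:: E]
  else [seq w * ((E + S) / tot) | w <- pop].

Fixpoint pc_iter (Nobj : nat) (U : nat -> nat -> R) (w0 : seq R) (l : nat) : seq R :=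
  match l with
  | 0%N => w0
  | l'.+1 => pc_step Nobj 0 (U l') (pc_iter Nobj U w0 l')
  end.

End PopulationControl.

Definition mutually_independent {d} {T : measurableType d} {R : realType}
  (P : probability T R) {I : eqType} (X : I -> T -> R) : Prop :=
  forall (J : seq I) (A : I -> set R),
    uniq J -> (forall j, measurable (A j)) ->
    P (\bigcap_(j in [set j | j \in J]) (X j @^-1` A j))
    = (\prod_(j <- J) P (X j @^-1` A j))%E.

Definition uniform01 {d} {T : measurableType d} {R : realType}
  (P : probability T R) (X : T -> R) : Prop :=
  forall A : set R, measurable A ->
    P (X @^-1` A) = (@lebesgue_measure R) (A `&` `[0, 1]).

(* Main.v *)
Require Import Defs.
From HB Require Import structures.
From mathcomp Require Import all_boot all_order all_algebra.
From mathcomp Require Import all_classical all_reals all_analysis.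
From mathcomp Require Import ring lra zify.
Import Order.TTheory GRing.Theory Num.Theory.
Local Open Scope classical_set_scope.
Local Open Scope ring_scope.
Set Implicit Arguments. Unset Strict Implicit. Unset Printing Implicit Defensive.

Section Prob.
Variables (R : realType) (d : measure_display) (T : measurableType d).
Variables (P : probability T R) (X : nat * nat -> T -> R).
Hypothesis Xm : forall j, measurable_fun setT (X j).
Hypothesis Xind : mutually_independent P X.

Definition Pr (A : set T) : R := fine (P A).

Lemma Pfin A : measurable A -> P A \is a fin_num.
Proof.
move=> mA; rewrite ge0_fin_numE ?measure_ge0 //.
exact: (le_lt_trans (probability_le1 P mA)) (ltry _).
Qed.

Lemma PrE A : measurable A -> P A = (Pr A)%:E.
Proof. by move=> mA; rewrite /Pr fineK // Pfin. Qed.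

Lemma Pr_ge0 A : 0 <= Pr A.
Proof. exact: fine_ge0 (measure_ge0 _ _). Qed.

Lemma Pr_le1 A : measurable A -> Pr A <= 1.
Proof. by move=> mA; rewrite -lee_fin -PrE // probability_le1. Qed.

Lemma PrT : Pr setT = 1.
Proof. by rewrite /Pr probability_setT. Qed.

Lemma Pr0 : Pr set0 = 0.
Proof. by rewrite /Pr measure0. Qed.

Lemma PrU A B : measurable A -> measurable B -> A `&` B = set0 ->
  Pr (A `|` B) = Pr A + Pr B.
Proof.
move=> mA mB AB; rewrite /Pr measureU //; by rewrite fineD ?inE ?Pfin.
Qed.

Lemma Pr_le A B : measurable A -> measurable B -> A `<=` B -> Pr A <= Pr B.
Proof.
move=> mA mB AB; rewrite -lee_fin -!PrE //; by apply: le_measure => //; rewrite inE.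
Qed.

Lemma measX j A : measurable A -> measurable (X j @^-1` A).
Proof. by move=> mA; rewrite -[_ @^-1` _]setTI; apply: Xm. Qed.

Definition box (J : seq (nat * nat)) (A : nat * nat -> set R) : set T :=
  \bigcap_(j in [set j | j \in J]) (X j @^-1` A j).

Lemma box_nil A : box [::] A = setT.
Proof. by apply/seteqP; split=> t //= _ j. Qed.

Lemma box_cons j J A : box (j :: J) A = X j @^-1` A j `&` box J A.
Proof.
apply/seteqP; split=> t /=.
  move=> H; split; first by apply: H; rewrite /= inE eqxx.
  by move=> i /= iJ; apply: H; rewrite /= inE iJ orbT.
move=> [H1 H2] i /=; rewrite inE => /orP [/eqP -> //|iJ]; exact: H2.
Qed.

Lemma box_ext J A A' : (forall j, j \in J -> A j = A' j) -> box J A = box J A'.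
Proof.
move=> H; apply/seteqP; split=> t /= Ht i /= iJ.
  by rewrite -H //; apply: Ht.
by rewrite H //; apply: Ht.
Qed.

Lemma box_meas J A : (forall j, measurable (A j)) -> measurable (box J A).
Proof.
move=> mA; elim: J => [|j J IH]; first by rewrite box_nil.
by rewrite box_cons; apply: measurableI => //; apply: measX.
Qed.

Lemma Pr_box_cons j J A : uniq (j :: J) -> (forall j, measurable (A j)) ->
  Pr (box (j :: J) A) = Pr (X j @^-1` A j) * Pr (box J A).
Proof.
move=> u mA.
have h1 := @Xind (j :: J) A u mA.
have h2 := @Xind J A (proj2 (andP u)) mA.
rewrite /Pr /box h1 big_cons -h2 fineM //; first exact/Pfin/measX.
exact/Pfin/box_meas.
Qed.

Definition Indep (Ok : pred (nat * nat)) (E : set T) :=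
  measurable E /\ forall J A, uniq J -> (forall j, measurable (A j)) ->
    all (predC Ok) J -> Pr (E `&` box J A) = Pr E * Pr (box J A).

Lemma Indep_mono (Ok Ok' : pred (nat * nat)) E :
  (forall j, Ok j -> Ok' j) -> Indep Ok E -> Indep Ok' E.
Proof.
move=> H [mE HE]; split=> // J A u mA aJ; apply: HE => //.
apply/allP => j /(allP aJ) /=; apply: contra; exact: H.
Qed.

Lemma IndepT Ok : Indep Ok setT.
Proof. by split=> // J A _ _ _; rewrite setTI PrT mul1r. Qed.

Lemma Indep0 Ok : Indep Ok set0.
Proof. by split=> // J A _ _ _; rewrite set0I Pr0 mul0r. Qed.

Lemma IndepU Ok E1 E2 : Indep Ok E1 -> Indep Ok E2 -> E1 `&` E2 = set0 ->
  Indep Ok (E1 `|` E2).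
Proof.
move=> [m1 H1] [m2 H2] D; split; first exact: measurableU.
move=> J A u mA aJ; rewrite setIUl PrU ?H1 ?H2 ?PrU //; first by rewrite mulrDl.
- by apply: measurableI => //; exact: box_meas.
- by apply: measurableI => //; exact: box_meas.
by rewrite setIACA D set0I.
Qed.

Lemma Indep_add Ok E j0 B : Indep Ok E -> ~~ Ok j0 -> measurable B ->
  Indep (fun j => Ok j || (j == j0)) (E `&` X j0 @^-1` B) /\
  Pr (E `&` X j0 @^-1` B) = Pr E * Pr (X j0 @^-1` B).
Proof.
move=> [mE HE] nO mB.
have mXB : measurable (X j0 @^-1` B) by exact: measX.
have key : forall J A, uniq J -> (forall j, measurable (A j)) ->
    all (predC (fun j => Ok j || (j == j0))) J ->
    Pr (E `&` X j0 @^-1` B `&` box J A) = Pr E * (Pr (X j0 @^-1` B) * Pr (box J A)).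
  move=> J A u mA aJ.
  pose A' := fun j => if j == j0 then B else A j.
  have mA' : forall j, measurable (A' j) by move=> j; rewrite /A'; case: ifP.
  have j0J : j0 \notin J.
    apply/negP => /(allP aJ) /=; by rewrite eqxx orbT.
  have eJ : box J A' = box J A.
    apply: box_ext => j jJ; rewrite /A'; case: eqP => // ej.
    by move: jJ; rewrite ej (negbTE j0J).
  have u' : uniq (j0 :: J) by rewrite /= j0J.
  have aJ' : all (predC Ok) (j0 :: J).
    rewrite /= nO /=; apply/allP => j /(allP aJ) /=; by case: (Ok j).
  have := HE _ _ u' mA' aJ'.
  rewrite Pr_box_cons // box_cons eJ /A' eqxx setIA => ->.
  by [].
have e1 : Pr (E `&` X j0 @^-1` B) = Pr E * Pr (X j0 @^-1` B).
  have := key [::] (fun _ => setT) isT (fun _ => measurableT) isT.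
  by rewrite box_nil setIT PrT mulr1.
split=> //; split; first exact: measurableI.
by move=> J A u mA aJ; rewrite key // e1 mulrA.
Qed.

Fixpoint lunion (s : seq nat) (F : nat -> set T) : set T :=
  if s is i :: s' then F i `|` lunion s' F else set0.

Lemma lunionP s F t : lunion s F t <-> exists2 i, i \in s & F i t.
Proof.
elim: s => [|i s IH] /=; first by split=> // -[].
split.
  case=> [Ht|/IH [k ks Hk]]; first by exists i; rewrite ?inE ?eqxx.
  by exists k; rewrite // inE ks orbT.
move=> [k]; rewrite inE => /orP [/eqP -> Hk|ks Hk]; first by left.
by right; apply/IH; exists k.
Qed.

Lemma lunion_Indep Ok s F : uniq s -> (forall i, i \in s -> Indep Ok (F i)) ->
  (forall i k, i != k -> F i `&` F k = set0) ->
  Indep Ok (lunion s F) /\ Pr (lunion s F) = \sum_(i <- s) Pr (F i).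
Proof.
move=> + + D; elim: s => [|i s IH] /=.
  by move=> _ _; rewrite big_nil Pr0; split => //; exact: Indep0.
move=> /andP [iNs us] HF.
have [IHi IHs] := IH us (fun k ks => HF k (mem_behead (s:=i :: s) ks)).
have Hi := HF i (mem_head _ _).
have Dis : F i `&` lunion s F = set0.
  apply/seteqP; split=> t // [Fi /lunionP [k ks Fk]].
  have ik : i != k by apply: contraNneq iNs => ->.
  by rewrite -(D _ _ ik); split.
split; first exact: IndepU.
by rewrite PrU ?big_cons ?IHs //; [case: Hi|case: IHi].
Qed.


Definition Zc l (bit : nat -> R -> bool) q t : nat :=
  \sum_(p < q) (bit p (X (l, nat_of_ord p) t) : nat).

Fixpoint fq (r : nat -> R) q k : R :=
  if q is q'.+1 then
    fq r q' k * (1 - r q') + (if k is k'.+1 then fq r q' k' * r q' else 0)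
  else (k == 0)%:R.

Definition Okq l q : pred (nat * nat) :=
  fun j => (j.1 < l)%N || ((j.1 == l) && (j.2 < q)%N).

Lemma Zc_S l bit q t : Zc l bit q.+1 t = (Zc l bit q t + bit q (X (l, q) t))%N.
Proof. by rewrite /Zc big_ord_recr. Qed.

Lemma Zc_le l bit q t : (Zc l bit q t <= q)%N.
Proof.
rewrite /Zc; apply: (@leq_trans (\sum_(p < q) 1)); last by rewrite sum1_card card_ord.
by apply: leq_sum => p _; exact: leq_b1.
Qed.

Lemma Clemma l (bit : nat -> R -> bool) (mbit : forall p, measurable [set u | bit p u]) E :
  Indep (fun j => (j.1 < l)%N) E -> forall q k,
  Indep (Okq l q) (E `&` [set t | Zc l bit q t == k]) /\
  Pr (E `&` [set t | Zc l bit q t == k]) =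
    Pr E * fq (fun p => Pr (X (l, p) @^-1` [set u | bit p u])) q k.
Proof.
move=> HE; elim=> [|q IH] k.
  case: k => [|k].
    have -> : E `&` [set t | Zc l bit 0 t == 0%N] = E.
      by apply/seteqP; split=> t /=; [case|move=> Et; split=> //; rewrite /Zc big_ord0].
    split; last by rewrite /= mulr1.
    by apply: Indep_mono HE => j; rewrite /Okq => ->.
  have -> : E `&` [set t | Zc l bit 0 t == k.+1] = set0.
    by apply/seteqP; split=> t //= [_]; rewrite /Zc big_ord0.
  by rewrite Pr0 /= mulr0; split=> //; exact: Indep0.
pose Sb b := X (l, q) @^-1` [set u | bit q u == b].
have mB b : measurable [set u : R | bit q u == b].
  case: b.
    by have -> : [set u | bit q u == true] = [set u | bit q u]
      by apply/seteqP; split=> u /=; case: (bit q u).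
  have -> : [set u | bit q u == false] = ~` [set u | bit q u].
    by apply/seteqP; split=> u /=; case: (bit q u).
  exact: measurableC.
have mSb b : measurable (Sb b) by exact: measX.
have ST : Sb true = X (l, q) @^-1` [set u | bit q u].
  by apply/seteqP; split=> u; rewrite /Sb /=; case: (bit q _).
have SF : Pr (Sb false) = 1 - Pr (Sb true).
  have : Pr (Sb true `|` Sb false) = 1.
    have -> : Sb true `|` Sb false = setT.
      by apply/seteqP; split=> t // _; rewrite /Sb /=; case: (bit q _); [left|right].
    exact: PrT.
  rewrite PrU //; first by move=> <-; rewrite addrAC subrr add0r.
  by apply/seteqP; split=> t //; rewrite /Sb /= => -[/eqP -> ].
have nOk : ~~ Okq l q (l, q) by rewrite /Okq /= ltnn eqxx ltnn.
have mono : forall j, Okq l q j || (j == (l, q)) -> Okq l q.+1 j.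
  move=> [a b]; rewrite /Okq /= => /orP [/orP [->//|/andP [al bq]]|/eqP [-> ->]].
    by rewrite al ltnS (ltnW bq) orbT.
  by rewrite eqxx ltnSn orbT.
have Seq : E `&` [set t | Zc l bit q.+1 t == k] =
  (E `&` [set t | Zc l bit q t == k] `&` Sb false) `|`
  (if k is k'.+1 then E `&` [set t | Zc l bit q t == k'] `&` Sb true else set0).
  apply/seteqP; split=> t /=.
    rewrite Zc_S; move=> [Et]; case Hb: (bit q _) => /eqP Hk.
      right; case: k Hk => [|k]; first by rewrite addn1.
      rewrite addn1 => -[Hk].
      by split; [split => //; rewrite /= Hk|rewrite /Sb /= Hb].
    left; rewrite addn0 in Hk.
    by split; [split => //; rewrite /= Hk|rewrite /Sb /= Hb].
  rewrite /Sb /=.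
  case=> [[[Et /eqP Hk] /eqP Hb]|]; first by split=> //; rewrite Zc_S Hb Hk addn0.
  case: k => // k [[Et /eqP Hk] /eqP Hb].
  by split=> //; rewrite Zc_S Hb Hk addn1.
rewrite Seq; have [I1 P1] := IH k.
have [A1 Q1] := Indep_add I1 nOk (mB false).
case: k Seq I1 P1 A1 Q1 => [|k] Seq I1 P1 A1 Q1.
  rewrite setU0; split; first exact: Indep_mono A1.
  by rewrite Q1 P1 /= SF ST addr0 mulrA.
have [I2 P2] := IH k.
have [A2 Q2] := Indep_add I2 nOk (mB true).
have Dis : E `&` [set t | Zc l bit q t == k.+1] `&` Sb false `&`
           (E `&` [set t | Zc l bit q t == k] `&` Sb true) = set0.
  by apply/seteqP; split=> t //; rewrite /Sb /= => -[[_ /eqP Hf] [_ /eqP Ht]]; rewrite Hf in Ht.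
split; first by apply: IndepU => //; exact: Indep_mono mono _.
rewrite PrU //; first last.
- by case: A2.
- by case: A1.
have ST' : Pr (X (l, q) @^-1` [set u | bit q u == true]) =
    Pr (X (l, q) @^-1` [set u | bit q u]) by rewrite -ST.
by rewrite Q1 Q2 P1 P2 SF ST ST' /=; ring.
Qed.

Lemma ClemmaQ l (bit : nat -> R -> bool) (mbit : forall p, measurable [set u | bit p u]) E :
  Indep (fun j => (j.1 < l)%N) E -> forall q (Q : pred nat),
  Indep (Okq l q) (E `&` [set t | Q (Zc l bit q t)]).
Proof.
move=> HE q Q.
have -> : E `&` [set t | Q (Zc l bit q t)] =
  lunion [seq k <- iota 0 q.+1 | Q k] (fun k => E `&` [set t | Zc l bit q t == k]).
  apply/seteqP; split=> t.
    move=> [Et HQ]; apply/lunionP; exists (Zc l bit q t).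
      by rewrite mem_filter HQ mem_iota add0n ltnS Zc_le.
    by split=> //=.
  move/lunionP=> [k]; rewrite mem_filter => /andP [Qk _] [Et /eqP Hk].
  by split=> //=; rewrite Hk.
apply: (proj1 (lunion_Indep _ _ _)).
- by apply: filter_uniq; exact: iota_uniq.
- by move=> k _; case: (Clemma mbit HE q k).
by move=> i k ik; apply/seteqP; split=> t //= [[_ /eqP ->] [_ /eqP /eqP]]; rewrite (negbTE ik).
Qed.

End Prob.


Section Fq.
Variable R : realType.
Implicit Types r : nat -> R.

Lemma fq_01 r q k : (forall p, 0 <= r p <= 1) -> 0 <= fq r q k <= 1.
Proof.
move=> hr; elim: q k => [|q IH] k /=; first by case: (k == 0%N); rewrite ?lexx ?ler01.
have /andP [r0 r1] := hr q.
have /andP [a0 a1] := IH k.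
case: k a0 a1 => [|k] a0 a1.
  rewrite addr0; apply/andP; split; first by apply: mulr_ge0; lra.
  by rewrite -[1]mulr1; apply: ler_pM => //; lra.
have /andP [b0 b1] := IH k.
apply/andP; split; first by apply: addr_ge0; apply: mulr_ge0 => //; lra.
nra.
Qed.

Lemma fq_pos r q k : (forall p, 0 <= r p < 1) ->
  (k <= \sum_(p < q) ((0 < r p)%R : nat))%N -> 0 < fq r q k.
Proof.
move=> hr; have hr' : forall p, 0 <= r p <= 1.
  by move=> p; have /andP [? ?] := hr p; apply/andP; split => //; exact: ltW.
elim: q k => [|q IH] k /=.
  by rewrite big_ord0 leqn0 => /eqP ->; rewrite ltr01.
rewrite big_ord_recr /=.
have /andP [r0 r1] := hr q.
have f0 : forall k, 0 <= fq r q k by move=> k'; case/andP: (fq_01 q k' hr').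
case: (ltrP 0 (r q)) => rq /=.
  case: k => [|k] hk.
    rewrite addr0; apply: mulr_gt0; first by apply: IH.
    by lra.
  have := IH k; rewrite addn1 ltnS in hk; move=> /(_ hk) hpos.
  have := f0 k.+1; nra.
rewrite addn0 => hk.
have := IH k hk; have : 0 <= (if k is k'.+1 then fq r q k' * r q else 0).
  by case: k hk => [|k] _ //; apply: mulr_ge0.
have e : r q = 0 by lra.
move=> hb hf; rewrite {1}e subr0 mulr1.
exact: ltr_wpDr hb hf.
Qed.

Lemma fq_one r q : (forall p, r p = 0) -> fq r q 0 = 1.
Proof. by move=> h; elim: q => [|q IH] //=; rewrite IH h subr0 mulr1 addr0. Qed.

Lemma count_pos r q k : (forall p, 0 <= r p < 1) ->
  \sum_(p < q) r p = k%:R -> (k <= \sum_(p < q) ((0 < r p)%R : nat))%N.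
Proof.
move=> hr hs; rewrite -(ler_nat R) -hs natr_sum.
apply: ler_sum => p _; have /andP [r0 r1] := hr p.
case: (ltrP 0 (r p)) => h /=; first by lra.
by lra.
Qed.

End Fq.

Section Det.
Variable R : realType.
Variable Nobj : nat.
Implicit Types ws : seq R.

Definition wob ws : R := (\sum_(w <- ws) w + 0) / Nobj%:R.
Definition ratw ws p : R := nth 0 ws p / wob ws.
Definition II ws p : nat := Num.truncn (ratw ws p).
Definition RR ws p : R := ratw ws p - (II ws p)%:R.
Definition bitf ws p (u : R) : bool :=
  if II ws p == 0%N then ~~ (RR ws p < u) else u < RR ws p.
Definition clamp (s : nat) : nat := if s == 0%N then 1%N else s.

Lemma size_part ws p u :
  size (pc_particle (wob ws) (nth 0 ws p) u) = (II ws p + bitf ws p u)%N.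
Proof.
rewrite /pc_particle /bitf /RR /II /ratw /=.
case: ifP => [/eqP h0 | _]; last by rewrite size_nseq.
rewrite h0; by case: ifP.
Qed.

Lemma mem_part (w0 w u x : R) : x \in pc_particle w0 w u -> x = w0.
Proof.
rewrite /pc_particle; case: eqP => _; first case: ifP => _.
- by [].
- by rewrite inE => /eqP.
by move/nseqP => [].
Qed.

Lemma step_eq u ws : (0 < Nobj)%N -> \sum_(w <- ws) w = 1 ->
  pc_step Nobj 0 u ws =
  nseq (clamp (\sum_(p < size ws) (II ws p + bitf ws p (u p))%N))
       (clamp (\sum_(p < size ws) (II ws p + bitf ws p (u p))%N))%:R^-1.
Proof.
move=> N0 hs.
set s := (\sum_(p < size ws) _)%N.
rewrite /pc_step /= -/(wob ws) ltxx eqxx /=.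
set ex := flatten _.
have sz : size ex = s.
  rewrite /ex size_flatten /shape -map_comp sumnE big_map.
  rewrite /s -(big_mkord xpredT (fun p => (II ws p + bitf ws p (u p))%N)).
  by rewrite /index_iota subn0; apply: eq_bigr => p _ /=; rewrite size_part.
have exE : ex = nseq (size ex) (wob ws).
  apply/all_pred1P/allP => x /flattenP [s0 /mapP [p _ ->] xin].
  by rewrite /= (mem_part xin).
have wobE : wob ws = Nobj%:R^-1 by rewrite /wob hs addr0 mul1r.
have Nn0 : Nobj%:R != 0 :> R by rewrite pnatr_eq0 -lt0n.
rewrite hs ltr01.
case: (eqVneq ex [::]) => [e0|ne0].
  have s0 : s = 0%N by rewrite -sz e0.
  by rewrite /clamp s0 /= invr1.
have s0 : s != 0%N by rewrite -sz; apply: contra ne0 => /eqP/size0nil ->.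
rewrite /clamp (negbTE s0) /=.
rewrite exE sz map_nseq big_nseq iter_addr_0 wobE.
congr nseq; rewrite addr0 mul1r.
have sn0 : s%:R != 0 :> R by rewrite pnatr_eq0.
rewrite -[Nobj%:R^-1 *+ s]mulr_natr; field; by rewrite ?Nn0 ?sn0.
Qed.

End Det.

Section Chain.
Variable R : realType.
Variable Nobj : nat.
Variable w0 : seq R.
Hypothesis hN : (0 < Nobj)%N.
Hypothesis hpos : all (fun w => 0 < w) w0.
Hypothesis hsum : \sum_(w <- w0) w = 1.
Implicit Types ws : seq R.

Definition M := (2 * Nobj + size w0)%N.
Definition Wt l n : seq R := if l is 0 then w0 else nseq n (n%:R^-1).
Definition KK (ws : seq R) := (Nobj - \sum_(p < size ws) II Nobj ws p)%N.
Definition SI l n := (\sum_(p < n) II Nobj (Wt l n) p)%N.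
Definition Zd l n (v : nat -> R) := (\sum_(p < n) bitf Nobj (Wt l n) p (v p))%N.

Definition good l n := [/\ size (Wt l n) = n, \sum_(w <- Wt l n) w = 1,
  forall p, 0 <= nth 0 (Wt l n) p, (0 < n)%N & (n <= M)%N].


Lemma wob_val ws : \sum_(w <- ws) w = 1 -> wob Nobj ws = Nobj%:R^-1.
Proof. by move=> hs; rewrite /wob hs addr0 mul1r. Qed.

Lemma rat_val ws p : \sum_(w <- ws) w = 1 -> ratw Nobj ws p = nth 0 ws p * Nobj%:R.
Proof. by move=> hs; rewrite /ratw wob_val // invrK. Qed.

Lemma RR_range ws p : \sum_(w <- ws) w = 1 -> (forall p, 0 <= nth 0 ws p) ->
  0 <= RR Nobj ws p < 1.
Proof.
move=> hs hn; have r0 : 0 <= ratw Nobj ws p.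
  by rewrite rat_val //; apply: mulr_ge0 => //; exact: ler0n.
have := truncn_itv r0; rewrite /RR /II => /andP [h1 h2].
apply/andP; split; first by rewrite subr_ge0.
by rewrite ltrBlDl natr1.
Qed.

Lemma sumRR ws : \sum_(w <- ws) w = 1 -> (forall p, 0 <= nth 0 ws p) ->
  (\sum_(p < size ws) II Nobj ws p <= Nobj)%N /\
  \sum_(p < size ws) RR Nobj ws p = (KK ws)%:R.
Proof.
move=> hs hn.
have e : \sum_(p < size ws) RR Nobj ws p =
         Nobj%:R - (\sum_(p < size ws) II Nobj ws p)%:R.
  rewrite /RR sumrB natr_sum; congr (_ - _).
  under eq_bigr do rewrite rat_val //.
  rewrite -mulr_suml; have -> : \sum_(i < size ws) nth 0 ws i = 1 by rewrite -hs (big_nth 0) big_mkord.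
  by rewrite mul1r.
have le : (\sum_(p < size ws) II Nobj ws p <= Nobj)%N.
  rewrite -(ler_nat R) -subr_ge0 -e; apply: sumr_ge0 => p _.
  by case/andP: (RR_range p hs hn).
by split=> //; rewrite e /KK natrB.
Qed.

Lemma good0 : good 0 (size w0).
Proof.
split=> //=.
- move=> p; case: (ltnP p (size w0)) => hp; last by rewrite nth_default.
  by apply: ltW; exact: (allP hpos) _ (mem_nth 0 hp).
- by case: w0 hsum => //; rewrite big_nil => /eqP; rewrite eq_sym oner_eq0.
by rewrite /M leq_addl.
Qed.

Lemma goodS l n : (0 < n)%N -> (n <= M)%N -> good l.+1 n.
Proof.
move=> n0 nM; split=> //=.
- by rewrite size_nseq.
- by rewrite big_nseq iter_addr_0 -[(n%:R^-1) *+ n]mulr_natr mulVf // pnatr_eq0 -lt0n.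
by move=> p; rewrite nth_nseq; case: ifP => // _; rewrite invr_ge0 ler0n.
Qed.

Lemma Zd_le l n v : (Zd l n v <= n)%N.
Proof.
rewrite /Zd; apply: (@leq_trans (\sum_(p < n) 1)); last by rewrite sum1_card card_ord.
by apply: leq_sum => p _; exact: leq_b1.
Qed.

Lemma bound l n v : good l n -> (0 < clamp (SI l n + Zd l n v) <= M)%N.
Proof.
move=> [sz hs hn n0 nM].
have [hI _] := sumRR hs hn; rewrite sz -/(SI l n) in hI.
have hZ := Zd_le l n v.
have M2 : (2 <= M)%N by rewrite /M; apply: leq_trans (leq_addr _ _); rewrite leq_pmulr.
suff h : (SI l n + Zd l n v <= M)%N.
  by rewrite /clamp; case: eqP => [_|/eqP]; [apply: ltnW | rewrite lt0n => -> ].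
case: l sz hs hn hI hZ => [|l] sz hs hn hI hZ.
  by rewrite /M; move: sz => /= sz; subst n; lia.
have hc : forall p : nat, (p < n)%N -> II Nobj (Wt l.+1 n) p = II Nobj (Wt l.+1 n) 0.
  by move=> p pn; rewrite /II /ratw /= !nth_nseq pn n0.
have eS : SI l.+1 n = (n * II Nobj (Wt l.+1 n) 0)%N.
  rewrite /SI (eq_bigr (fun _ => II Nobj (Wt l.+1 n) 0)).
    by rewrite sum_nat_const card_ord.
  by move=> p _; exact: hc.
case: (posnP (II Nobj (Wt l.+1 n) 0)) => h0.
  by rewrite eS h0 muln0 add0n; apply: leq_trans hZ nM.
have nN : (n <= Nobj)%N.
  by apply: leq_trans hI; rewrite eS leq_pmulr.
rewrite /M; apply: leq_trans (leq_addr _ _).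
by rewrite mul2n -addnn; apply: leq_add => //; apply: leq_trans hZ nN.
Qed.

Lemma step_Y (uu : nat -> nat -> R) l n :
  pc_iter Nobj uu w0 l = Wt l n -> good l n ->
  pc_iter Nobj uu w0 l.+1 = Wt l.+1 (clamp (SI l n + Zd l n (uu l))).
Proof.
move=> H g; case: (g) => sz hs _ _ _.
rewrite /= H step_eq // sz big_split /=.
by [].
Qed.

Lemma inv_det (uu : nat -> nat -> R) l :
  pc_iter Nobj uu w0 l = Wt l (size (pc_iter Nobj uu w0 l)) /\
  good l (size (pc_iter Nobj uu w0 l)).
Proof.
elim: l => [|l [H g]]; first by split=> //; exact: good0.
have := step_Y H g; set m := clamp _ => e.
have /andP [m0 mM] : (0 < m <= M)%N by exact: bound.
have szm : size (pc_iter Nobj uu w0 l.+1) = m by rewrite e /= size_nseq.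
by rewrite szm; split=> //; exact: goodS.
Qed.

Lemma Y_step (uu : nat -> nat -> R) l :
  size (pc_iter Nobj uu w0 l.+1) =
  clamp (SI l (size (pc_iter Nobj uu w0 l)) + Zd l (size (pc_iter Nobj uu w0 l)) (uu l)).
Proof.
have [H g] := inv_det uu l.
by rewrite (step_Y H g) /= size_nseq.
Qed.

End Chain.

Section Prob2.
Variables (R : realType) (d : measure_display) (T : measurableType d).
Variables (P : probability T R) (U : nat -> nat -> T -> R) (Nobj : nat) (w0 : seq R).
Hypothesis hN : (0 < Nobj)%N.
Hypothesis hsz : (0 < size w0)%N.
Hypothesis hpos : all (fun w => 0 < w) w0.
Hypothesis hsum : \sum_(w <- w0) w = 1.
Hypothesis Hm : forall l p, measurable_fun setT (U l p).
Hypothesis Hu : forall l p, uniform01 P (U l p).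
Hypothesis Hind : mutually_independent P (fun ij : nat * nat => U ij.1 ij.2).

Definition Xf (j : nat * nat) : T -> R := U j.1 j.2.
Lemma Xm : forall j, measurable_fun setT (Xf j).
Proof. by move=> [a b]; exact: Hm. Qed.
Lemma Xi : mutually_independent P Xf.
Proof. exact: Hind. Qed.

Lemma unif_le (r : R) : 0 <= r < 1 ->
  lebesgue_measure ([set u : R | ~~ (r < u)] `&` `[0, 1]) = r%:E.
Proof.
move=> /andP [r0 r1].
have -> : [set u : R | ~~ (r < u)] `&` `[0, 1] = [set` `[0, r]].
  apply/seteqP; split=> u /=; rewrite !in_itv /= -leNgt.
    by move=> [ur /andP [u0 _]]; rewrite u0 ur.
  move=> /andP [u0 ur]; split => //; rewrite u0 /=; lra.
rewrite lebesgue_measure_itv /= lte_fin.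
case: ltP => h; first by rewrite oppr0 adde0.
by have -> : r = 0 by lra.
Qed.

Lemma unif_lt (r : R) : 0 <= r < 1 ->
  lebesgue_measure ([set u : R | u < r] `&` `[0, 1]) = r%:E.
Proof.
move=> /andP [r0 r1].
have -> : [set u : R | u < r] `&` `[0, 1] = [set` `[0, r[].
  apply/seteqP; split=> u /=; rewrite !in_itv /=.
    by move=> [ur /andP [u0 _]]; rewrite u0 ur.
  move=> /andP [u0 ur]; split => //; rewrite u0 /=; lra.
rewrite lebesgue_measure_itv /= lte_fin.
case: ltP => h; first by rewrite oppr0 adde0.
by have -> : r = 0 by lra.
Qed.


Lemma mbitf (ws : seq R) p : measurable [set u : R | bitf Nobj ws p u].
Proof.
rewrite /bitf; case: eqP => _.
  have -> : [set u : R | ~~ (RR Nobj ws p < u)] = [set` `]-oo, RR Nobj ws p]].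
    by apply/seteqP; split=> u /=; rewrite in_itv /= leNgt.
  exact: measurable_itv.
have -> : [set u : R | u < RR Nobj ws p] = [set` `]-oo, RR Nobj ws p[].
  by apply/seteqP; split=> u /=; rewrite in_itv /=.
exact: measurable_itv.
Qed.

Lemma Pr_bit j (ws : seq R) p : \sum_(w <- ws) w = 1 -> (forall p, 0 <= nth 0 ws p) ->
  Pr P (Xf j @^-1` [set u | bitf Nobj ws p u]) = RR Nobj ws p.
Proof.
move=> hs hn; have hr := RR_range Nobj p hs hn.
rewrite /Pr /Xf (Hu j.1 j.2 (mbitf ws p)).
rewrite /bitf; case: eqP => _; [rewrite unif_le // | rewrite unif_lt //].
Qed.

Definition Y l t := size (pc_iter Nobj (fun l' p => U l' p t) w0 l).
Local Notation MM := (M Nobj w0).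

Lemma Y_good l t : good Nobj w0 l (Y l t).
Proof. exact: (inv_det hN hpos hsum (fun l' p => U l' p t) l).2. Qed.

Lemma Y_range l t : (0 < Y l t)%N && (Y l t <= MM)%N.
Proof. by case: (Y_good l t) => _ _ _ -> ->. Qed.

Lemma Y_S l t : Y l.+1 t =
  clamp (SI Nobj w0 l (Y l t) + Zc Xf l (bitf Nobj (Wt w0 l (Y l t))) (Y l t) t).
Proof. exact: (Y_step hN hpos hsum (fun l' p => U l' p t) l). Qed.

Lemma decomp l (Q : pred nat) : [set t | Q (Y l.+1 t)] =
  lunion (iota 1 MM) (fun n => [set t | Y l t == n] `&`
     [set t | Q (clamp (SI Nobj w0 l n + Zc Xf l (bitf Nobj (Wt w0 l n)) n t))]).
Proof.
apply/seteqP; split=> t.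
  move=> /= HQ; apply/lunionP; exists (Y l t).
    rewrite mem_iota; have /andP [a b] := Y_range l t; lia.
  by split => //=; rewrite -Y_S.
by move/lunionP => [n _ [/= /eqP Hn HQ]]; rewrite /= Y_S Hn.
Qed.

Lemma decomp0 l (Q : pred nat) : [set t | Q (Y l t)] =
  lunion (iota 1 MM) (fun n => [set t | (Y l t == n) && Q (Y l t)]).
Proof.
apply/seteqP; split=> t.
  move=> /= HQ; apply/lunionP; exists (Y l t).
    rewrite mem_iota; have /andP [a b] := Y_range l t; lia.
  by rewrite /= eqxx HQ.
by move/lunionP => [n _ /= /andP [_ ->]].
Qed.

Lemma okq_mono l n : forall j, Okq l n j -> (j.1 < l.+1)%N.
Proof.
move=> [a b]; rewrite /Okq /= => /orP [h|/andP [/eqP -> _]]; last exact: ltnSn.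
exact: ltnW.
Qed.

Lemma inv_indep l (Q : pred nat) : Indep P Xf (fun j => (j.1 < l)%N) [set t | Q (Y l t)].
Proof.
elim: l Q => [|l IH] Q.
  have -> : [set t | Q (Y 0 t)] = if Q (size w0) then setT else set0.
    by case: ifP => h; apply/seteqP; split => t //=; rewrite /Y /= h.
  case: ifP => _; [exact: IndepT | exact: Indep0].
have -> := decomp l Q.
refine (proj1 (lunion_Indep Xm (iota_uniq 1 MM) _ _)).
- move=> n _.
  apply: Indep_mono (ClemmaQ Xm Xi (mbitf _) (IH (fun y => y == n)) n
     (fun z => Q (clamp (SI Nobj w0 l n + z)))).
  exact: okq_mono.
move=> i k ik; apply/seteqP; split => t //= [[/eqP Hi _] [/eqP Hk _]].
by move: ik; rewrite -Hi -Hk eqxx.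
Qed.

Lemma piece_indep l n (Q : pred nat) : Indep P Xf (fun j => (j.1 < l.+1)%N)
  ([set t | Y l t == n] `&`
     [set t | Q (clamp (SI Nobj w0 l n + Zc Xf l (bitf Nobj (Wt w0 l n)) n t))]).
Proof.
apply: Indep_mono (ClemmaQ Xm Xi (mbitf _) (inv_indep l (fun y => y == n)) n
     (fun z => Q (clamp (SI Nobj w0 l n + z)))).
exact: okq_mono.
Qed.

Lemma PrZ l n E K : Indep P Xf (fun j => (j.1 < l)%N) E -> good Nobj w0 l n ->
  Pr P (E `&` [set t | Zc Xf l (bitf Nobj (Wt w0 l n)) n t == K]) =
  Pr P E * fq (RR Nobj (Wt w0 l n)) n K.
Proof.
move=> HE [_ hs hn _ _].
have [_ ->] := Clemma Xm Xi (mbitf (Wt w0 l n)) HE n K.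
congr (_ * _); congr fq; apply: funext => p; exact: Pr_bit.
Qed.

Lemma PrZc l n E K : Indep P Xf (fun j => (j.1 < l)%N) E -> good Nobj w0 l n ->
  Pr P (E `&` [set t | Zc Xf l (bitf Nobj (Wt w0 l n)) n t != K]) =
  Pr P E * (1 - fq (RR Nobj (Wt w0 l n)) n K).
Proof.
move=> HE g.
have m1 := (Clemma Xm Xi (mbitf (Wt w0 l n)) HE n K).1.1.
have m2 := (ClemmaQ Xm Xi (mbitf (Wt w0 l n)) HE n (fun z => z != K)).1.
have : Pr P E = Pr P (E `&` [set t | Zc Xf l (bitf Nobj (Wt w0 l n)) n t == K]) +
                Pr P (E `&` [set t | Zc Xf l (bitf Nobj (Wt w0 l n)) n t != K]).
  rewrite -PrU //; last first.
    by apply/seteqP; split=> t //= [[_ /eqP ->] [_]]; rewrite eqxx.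
  congr (Pr P _); apply/seteqP; split=> t /=.
    by move=> Et; case: eqP => h; [left|right]; split=> //; apply/eqP.
  by case=> -[].
rewrite (@PrZ l n E K HE g) => e; rewrite mulrBr mulr1; lra.
Qed.

Definition pn l n := fq (RR Nobj (Wt w0 l n)) n (KK Nobj (Wt w0 l n)).

Lemma pn_pos l n : good Nobj w0 l n -> 0 < pn l n <= 1.
Proof.
move=> [sz hs hn _ _].
have [_ hsR] := sumRR Nobj hs hn; rewrite sz in hsR.
have hr : forall p, 0 <= RR Nobj (Wt w0 l n) p < 1 by move=> p; exact: RR_range.
have hr' : forall p, 0 <= RR Nobj (Wt w0 l n) p <= 1.
  by move=> p; have /andP [? ?] := hr p; apply/andP; split => //; exact: ltW.
apply/andP; split; first exact: (fq_pos hr (count_pos hr hsR)).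
by case/andP: (fq_01 n (KK Nobj (Wt w0 l n)) hr').
Qed.

Lemma pn_one l : pn l.+1 Nobj = 1.
Proof.
have g : good Nobj w0 l.+1 Nobj by apply: goodS => //; rewrite /M; lia.
case: g => sz hs _ _ _.
have Nn0 : Nobj%:R != 0 :> R by rewrite pnatr_eq0 -lt0n.
have hII : forall p, II Nobj (Wt w0 l.+1 Nobj) p = (p < Nobj)%N.
  move=> p; rewrite /II rat_val // /= nth_nseq; case: ifP => _.
    by rewrite mulVf // truncn1.
  by rewrite mul0r truncn0.
have hRR : forall p, RR Nobj (Wt w0 l.+1 Nobj) p = 0.
  move=> p; rewrite /RR rat_val // hII /= nth_nseq; case: ifP => _.
    by rewrite mulVf // subrr.
  by rewrite mul0r subrr.
have hK : KK Nobj (Wt w0 l.+1 Nobj) = 0%N.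
  rewrite /KK sz (eq_bigr (fun _ => 1%N)); last by move=> [p hp] _ /=; rewrite hII hp.
  by rewrite sum1_card card_ord subnn.
by rewrite /pn hK; apply: fq_one.
Qed.


Lemma SIK l n : good Nobj w0 l n ->
  (SI Nobj w0 l n + KK Nobj (Wt w0 l n) = Nobj)%N.
Proof.
move=> [sz hs hn _ _]; have [h _] := sumRR Nobj hs hn; rewrite sz in h.
by rewrite /KK sz subnKC.
Qed.

Lemma clampN : clamp Nobj = Nobj.
Proof. by rewrite /clamp; case: eqP => // h; move: hN; rewrite h. Qed.

Lemma step_bound l c : 0 <= c ->
  (forall n, (0 < n)%N -> (n <= MM)%N -> n != Nobj -> 1 - pn l.+1 n <= c) ->
  Pr P [set t | Y l.+2 t != Nobj] <= c * Pr P [set t | Y l.+1 t != Nobj].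
Proof.
move=> c0 hc.
have -> : [set t | Y l.+2 t != Nobj] = _ := decomp l.+1 (fun y => y != Nobj).
have -> : [set t | Y l.+1 t != Nobj] = _ := decomp0 l.+1 (fun y => y != Nobj).
have D1 : forall (Q : pred nat) i k, i != k ->
   [set t | Y l.+1 t == i] `&` [set t | Q (clamp (SI Nobj w0 l.+1 i +
      Zc Xf l.+1 (bitf Nobj (Wt w0 l.+1 i)) i t))] `&`
   ([set t | Y l.+1 t == k] `&` [set t | Q (clamp (SI Nobj w0 l.+1 k +
      Zc Xf l.+1 (bitf Nobj (Wt w0 l.+1 k)) k t))]) = set0.
  move=> Q i k ik; apply/seteqP; split => t //= [[/eqP Hi _] [/eqP Hk _]].
  by move: ik; rewrite -Hi -Hk eqxx.
have D2 : forall i k, i != k ->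
   [set t | (Y l.+1 t == i) && (Y l.+1 t != Nobj)] `&`
   [set t | (Y l.+1 t == k) && (Y l.+1 t != Nobj)] = set0.
  move=> i k ik; apply/seteqP; split => t //= [/andP [/eqP Hi _] /andP [/eqP Hk _]].
  by move: ik; rewrite -Hi -Hk eqxx.
have [_ ->] := lunion_Indep Xm (iota_uniq 1 MM)
   (fun n _ => piece_indep l.+1 n (fun y => y != Nobj)) (D1 (fun y => y != Nobj)).
have [_ ->] := lunion_Indep Xm (iota_uniq 1 MM)
   (fun n _ => inv_indep l.+1 (fun y => (y == n) && (y != Nobj))) D2.
rewrite big_seq [X in _ <= c * X]big_seq mulr_sumr; apply: ler_sum => n.
rewrite mem_iota => /andP [n1 n2].
have g : good Nobj w0 l.+1 n by apply: goodS; lia.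
have HE := inv_indep l.+1 (fun y => y == n).
have mF := (piece_indep l.+1 n (fun y => y != Nobj)).1.
have mG := (ClemmaQ Xm Xi (mbitf (Wt w0 l.+1 n)) HE n
   (fun z => z != KK Nobj (Wt w0 l.+1 n))).1.
apply: (le_trans (y := Pr P ([set t | Y l.+1 t == n] `&`
   [set t | Zc Xf l.+1 (bitf Nobj (Wt w0 l.+1 n)) n t != KK Nobj (Wt w0 l.+1 n)]))).
  apply: Pr_le mF mG _.
  move=> t /= [Hn HQ]; split => //; apply: contra HQ => /eqP ->.
  by rewrite SIK // clampN.
rewrite (@PrZc l.+1 n _ _ HE g) -/(pn l.+1 n).
case: (eqVneq n Nobj) => [-> | nN].
  by rewrite pn_one subrr mulr0; apply: mulr_ge0 => //; exact: Pr_ge0.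
have -> : [set t | (Y l.+1 t == n) && (Y l.+1 t != Nobj)] = [set t | Y l.+1 t == n].
  apply/seteqP; split => t /=; first by case/andP.
  by move=> /[dup] /eqP -> ->.
rewrite mulrC; apply: ler_wpM2r; first exact: Pr_ge0.
apply: hc => //; lia.
Qed.

Lemma step0 : Pr P [set t | Y 1 t != Nobj] <= 1 - pn 0 (size w0).
Proof.
have HE : Indep P Xf (fun j => (j.1 < 0)%N) setT by exact: IndepT.
have mA := (inv_indep 1 (fun y => y != Nobj)).1.
have mG := (ClemmaQ Xm Xi (mbitf (Wt w0 0 (size w0))) HE (size w0)
   (fun z => z != KK Nobj (Wt w0 0 (size w0)))).1.
apply: (le_trans (y := Pr P (setT `&`
   [set t | Zc Xf 0 (bitf Nobj (Wt w0 0 (size w0))) (size w0) t != KK Nobj (Wt w0 0 (size w0))]))).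
  apply: Pr_le mA mG _.
  move=> t /= HQ; split => //; move: HQ; rewrite Y_S; apply: contra => /eqP ->.
  by rewrite SIK ?clampN //; exact: good0.
have g0 : good Nobj w0 0 (size w0) by exact: good0.
by rewrite (@PrZc 0 (size w0) _ _ HE g0) PrT mul1r.
Qed.


Lemma prod_bounds (f : nat -> R) (s : seq nat) :
  (forall i, i \in s -> 0 < f i <= 1) ->
  0 < \prod_(i <- s) f i <= 1 /\ forall i, i \in s -> \prod_(i <- s) f i <= f i.
Proof.
elim: s => [|a s IH] H; first by rewrite big_nil ltr01 lexx.
have [/andP [p0 p1] hs] := IH (fun i hi => H i (mem_behead (s := a :: s) hi)).
have /andP [a0 a1] := H a (mem_head _ _).
rewrite big_cons; split.
  apply/andP; split; first exact: mulr_gt0.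
  by nra.
move=> i; rewrite inE => /orP [/eqP -> | hi]; first by nra.
have := hs i hi; have /andP [i0 i1] := H i (mem_behead (s := a :: s) hi); nra.
Qed.

Definition cc := 1 - (pn 0 (size w0) * \prod_(n <- iota 1 MM) pn 1 n) / 2.

Lemma cc_props : 0 < cc < 1 /\ 1 - pn 0 (size w0) <= cc /\
  forall n, (0 < n)%N -> (n <= MM)%N -> 1 - pn 1 n <= cc.
Proof.
have /andP [q0 q1] : 0 < pn 0 (size w0) <= 1.
  by apply: pn_pos; exact: good0.
have hf : forall i, i \in iota 1 MM -> 0 < pn 1 i <= 1.
  move=> i; rewrite mem_iota => /andP [i1 i2]; apply: pn_pos; apply: goodS; lia.
have [/andP [r0 r1] hr] := prod_bounds hf.
rewrite /cc; split; first by apply/andP; split; nra.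
split; first by nra.
move=> n n0 nM; have := hr n; rewrite mem_iota => /(_ _) h.
have {h} h : \prod_(n <- iota 1 MM) pn 1 n <= pn 1 n by apply: h; lia.
nra.
Qed.

Lemma main_bound l : Pr P [set t | Y l t != Nobj] <= cc ^+ l.
Proof.
have [/andP [c0 c1] [h0 h1]] := cc_props.
case: l => [|l].
  by rewrite expr0; apply: Pr_le1; exact: (inv_indep 0 (fun y => y != Nobj)).1.
elim: l => [|l IH]; first by rewrite expr1; apply: le_trans step0 h0.
apply: le_trans (step_bound (ltW c0) _) _.
  by move=> n n0 nM _; exact: h1.
by rewrite exprS; apply: ler_wpM2l => //; exact: ltW.
Qed.

End Prob2.

Unset Implicit Arguments.
Set Strict Implicit.

Theorem proposition1 (R : realType) (d : measure_display) (T : measurableType d)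
  (P : probability T R) (U : nat -> nat -> T -> R)
  (Nobj : nat) (w0 : seq R) :
  (0 < Nobj)%N ->
  (0 < size w0)%N ->
  all (fun w => 0 < w) w0 ->
  \sum_(w <- w0) w = 1 ->
  (forall l p, measurable_fun setT (U l p)) ->
  (forall l p, uniform01 P (U l p)) ->
  mutually_independent P (fun ij : nat * nat => U ij.1 ij.2) ->
  exists lambda : R, 0 < lambda /\
    forall l : nat,
      (P [set t | size (pc_iter Nobj (fun l' p => U l' p t) w0 l) != Nobj]
      <= (expR (- (l%:R * lambda)))%:E)%E.
Proof.
move=> hN hsz hpos hsum Hm Hu Hind.
have [/andP [c0 c1] _] := cc_props hN hsz hpos hsum.
set c := cc Nobj w0 in c0 c1 *.
exists (- ln c); split.
  by rewrite oppr_gt0; apply: ln_lt0; rewrite c0 c1.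
move=> l.
have mA := (inv_indep (P := P) hN hsz hpos hsum Hm Hind l (fun y => y != Nobj)).1.
rewrite (PrE P mA) lee_fin mulrN opprK expRM_natl lnK; last by rewrite posrE.
exact: (main_bound hN hsz hpos hsum Hm Hu Hind l).
Qed.
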